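(* In the setting of the context, let $\phi:F(G)\to\coprod_A G_\lambda$ be the unique homomorphism with $\phi(g)=g$ for all $g\in G$ (it is surjective and $1$-Lipschitz from $(F(G),d_F)$ to $(\coprod_A G_\lambda,\underline d)$), let $\mathfrak N=\ker\phi$, and let $d_0$ be the factor metric on $F(G)/\mathfrak N$. Then the isomorphism $F(G)/\mathfrak N\to\coprod_A G_\lambda$ induced by $\phi$ is an isometry from $(F(G)/\mathfrak N,d_0)$ onto $(\coprod_A G_\lambda,\underline d)$.
   Context: Setting: $(G_\lambda,d_\lambda)_{\lambda\in\Lambda}$ are groups with two-sided invariant metrics, $A$ is a common subgroup closed in every $G_\lambda$, $G_{\lambda_1}\cap G_{\lambda_2}=A$ for $\lambda_1\ne\lambda_2$, all $d_\lambda$ agree on $A$; $G=\bigcup_\lambda G_\lambda$ with the amalgam metric $d$ ($d=d_\lambda$ on $G_\lambda$; $d(f_1,f_2)=\inf_{a\in A}\{d_{\lambda_1}(f_1,a)+d_{\lambda_2}(a,f_2)\}$ if $f_1\in G_{\lambda_1}$, $f_2\in G_{\lambda_2}$ are not in a common $G_\lambda$), and $\underline d$ is the Graev metric on $\coprod_A G_\lambda$: $\underline d(f_1,f_2)=\inf\{\sum_i d(\alpha_1(i),\alpha_2(i)) : |\alpha_1|=|\alpha_2|,\ \hat\alpha_i=f_i\}$ over words in the alphabet $G$, $\hat\alpha$ being the product of the letters. Graev metric on free groups: for a pointed metric space $(X,e,d)$, let $X^{-1}$ be a set of formal inverses with $e^{-1}=e$, $X\cap X^{-1}=\{e\}$,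 and $\overline X=X\cup X^{-1}$ with metric $d(x^{-1},y^{-1})=d(x,y)$, $d(x,y^{-1})=d(x,e)+d(e,y)$ for $x,y\in X$. $F(X)$ is the free group on $X\setminus\{e\}$ (with $e$ interpreted as the identity); for a word $u$ over $\overline X$, $\hat u\in F(X)$ is its evaluation. For words $u,v$ of equal length $\rho(u,v)=\sum_i d(u(i),v(i))$, and $d_F(f,g)=\inf\{\rho(u,v):|u|=|v|,\hat u=f,\hat v=g\}$; this is a two-sided invariant metric on $F(X)$. Here $X=G$ pointed at the identity $e$ with the amalgam metric $d$. Factor metric: for a group $H$ with two-sided invariant metric $\delta$ and closed normal subgroup $N$, $d_0(g_1N,g_2N)=\inf\{\delta(g_1h_1,g_2h_2):h_1,h_2\in N\}$. *)

(* Defs.v *)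
From Stdlib Require Import Reals List Relations ClassicalEpsilon.
Open Scope R_scope.

Definition is_glb (S : R -> Prop) (m : R) : Prop :=
  (forall x, S x -> m <= x) /\ (forall m', (forall x, S x -> m' <= x) -> m' <= m).

Definition Rinf (S : R -> Prop) : R :=
  epsilon (inhabits 0%R) (fun m => is_glb S m).

(** The carrier [T] plays the role of G = ⋃ G_λ;
    [In l] is the subset G_λ, [A] the common subgroup, [dl l] the metric d_λ.
    [mul]/[inv]/[e] are the group operations of the G_λ (they agree on
    intersections, which are all A); [mul x y] for x,y not in a common G_λ
    is meaningless and never used. *)
Record amalgam_data := {
  T : Type;
  Lam : Type;
  e : T;
  mul : T -> T -> T;
  inv : T -> T;
  In : Lam -> T -> Prop;
  A : T -> Prop;
  dl : Lam -> T -> T -> R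
}.

Definition amalgam_setting (D : amalgam_data) : Prop :=
  let e := e D in let mul := mul D in let inv := inv D in
  let In := In D in let A := A D in let dl := dl D in
  (forall x, exists l, In l x) /\
  (forall l, In l e) /\
  (forall l x y, In l x -> In l y -> In l (mul x y)) /\
  (forall l x, In l x -> In l (inv x)) /\
  (forall l x y z, In l x -> In l y -> In l z -> mul (mul x y) z = mul x (mul y z)) /\
  (forall l x, In l x -> mul e x = x /\ mul x e = x) /\
  (forall l x, In l x -> mul x (inv x) = e /\ mul (inv x) x = e) /\
  A e /\
  (forall x y, A x -> A y -> A (mul x y)) /\
  (forall x, A x -> A (inv x)) /\
  (forall l x, A x -> In l x) /\
  (forall l1 l2 x, l1 <> l2 -> In l1 x -> In l2 x -> A x) /\
  (forall l x y, In l x -> In l y -> 0 <= dl l x y) /\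
  (forall l x y, In l x -> In l y -> (dl l x y = 0 <-> x = y)) /\
  (forall l x y, In l x -> In l y -> dl l x y = dl l y x) /\
  (forall l x y z, In l x -> In l y -> In l z -> dl l x z <= dl l x y + dl l y z) /\
  (forall l x y z, In l x -> In l y -> In l z ->
     dl l (mul z x) (mul z y) = dl l x y /\ dl l (mul x z) (mul y z) = dl l x y) /\
  (forall l x, In l x -> (forall eps, 0 < eps -> exists a, A a /\ dl l x a < eps) -> A x) /\
  (forall l1 l2 a b, A a -> A b -> dl l1 a b = dl l2 a b).

Definition amalg_dist (D : amalgam_data) (x y : T D) : R :=
  Rinf (fun r =>
    (exists l, In D l x /\ In D l y /\ r = dl D l x y) \/
    ((~ exists l, In D l x /\ In D l y) /\
      exists l1 l2 a, In D l1 x /\ In D l2 y /\ A D a /\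
        r = dl D l1 x a + dl D l2 a y)).

Fixpoint rho {L : Type} (dd : L -> L -> R) (u v : list L) : R :=
  match u, v with
  | a :: u', b :: v' => dd a b + rho dd u' v'
  | _, _ => 0
  end.

(** Letters of X̄ = X ∪ X^{-1}: (x,false) is x, (x,true) is the formal x^{-1};
    (e,true) and (e,false) both denote e (consistent with the metric below). *)
Definition letter_dist {X : Type} (d : X -> X -> R) (e0 : X) (p q : X * bool) : R :=
  match p, q with
  | (x, false), (y, false) => d x y
  | (x, true), (y, true) => d x y
  | (x, _), (y, _) => d x e0 + d e0 y
  end.

(** Free group F(X) on X \ {e}: words over X̄ modulo free reduction
    (with e read as the identity). *)
Inductive free_step {X : Type} (e0 : X) : list (X * bool) -> list (X * bool) -> Prop :=
| fs_cancel u v x b : free_step e0 (u ++ (x, b) :: (x, negb b) :: v) (u ++ v)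
| fs_unit u v b : free_step e0 (u ++ (e0, b) :: v) (u ++ v).

Definition free_eq {X : Type} (e0 : X) : relation (list (X * bool)) :=
  clos_refl_sym_trans _ (free_step e0).

Inductive amal_step (D : amalgam_data) : list (T D) -> list (T D) -> Prop :=
| as_mul (u v : list (T D)) l a b : In D l a -> In D l b ->
    amal_step D (u ++ a :: b :: v) (u ++ mul D a b :: v)
| as_unit (u v : list (T D)) : amal_step D (u ++ e D :: v) (u ++ v).

Definition amal_eq (D : amalgam_data) : relation (list (T D)) :=
  clos_refl_sym_trans _ (amal_step D).

Definition phiw (D : amalgam_data) (w : list (T D * bool)) : list (T D) :=
  map (fun p : T D * bool => if snd p then inv D (fst p) else fst p) w.

(** Graev metric d_F on F(G) (X = G pointed at e with amalgam metric d),
    evaluated on classes of representing words u0, v0. *)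
Definition dF (D : amalgam_data) (u0 v0 : list (T D * bool)) : R :=
  Rinf (fun r => exists u v, length u = length v /\
    free_eq (e D) u u0 /\ free_eq (e D) v v0 /\
    r = rho (letter_dist (amalg_dist D) (e D)) u v).

Definition dunder (D : amalgam_data) (a0 b0 : list (T D)) : R :=
  Rinf (fun r => exists a b, length a = length b /\
    amal_eq D a a0 /\ amal_eq D b b0 /\ r = rho (amalg_dist D) a b).

Definition inN (D : amalgam_data) (h : list (T D * bool)) : Prop :=
  amal_eq D (phiw D h) nil.

Definition d0 (D : amalgam_data) (w1 w2 : list (T D * bool)) : R :=
  Rinf (fun r => exists h1 h2, inN D h1 /\ inN D h2 /\
    r = dF D (w1 ++ h1) (w2 ++ h2)).

(* Main.v *)
Require Import Defs.
From Stdlib Require Import Reals List Relations.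
From Stdlib Require Import Lra Lia Classical ClassicalEpsilon.

Open Scope R_scope.

Lemma glb_ex (S : R -> Prop) : (exists x, S x) -> (exists b, forall x, S x -> b <= x) ->
  exists m, is_glb S m.
Proof.
  intros [x0 Hx0] [b Hb].
  destruct (completeness (fun y => S (-y))) as [m [Hm1 Hm2]].
  - exists (-b). intros y Hy. specialize (Hb _ Hy). lra.
  - exists (-x0). rewrite Ropp_involutive. exact Hx0.
  - exists (-m). split.
    + intros x Hx. assert (H := Hm1 (-x)). cbv beta in H. rewrite Ropp_involutive in H.
      specialize (H Hx). lra.
    + intros m' Hm'. assert (m <= -m'). { apply Hm2. intros y Hy. specialize (Hm' _ Hy). lra. }
      lra.
Qed.

Lemma Rinf_spec S : (exists x, S x) -> (exists b, forall x, S x -> b <= x) -> is_glb S (Rinf S).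
Proof. intros H1 H2. unfold Rinf. apply epsilon_spec. apply glb_ex; auto. Qed.

Lemma Rinf_le S b x : (forall y, S y -> b <= y) -> S x -> Rinf S <= x.
Proof. intros Hb Hx. apply (Rinf_spec S); eauto. Qed.

Lemma Rinf_ge S m : (exists x, S x) -> (forall y, S y -> m <= y) -> m <= Rinf S.
Proof. intros Hn Hm. apply (Rinf_spec S Hn (ex_intro _ m Hm)). exact Hm. Qed.

Ltac dHD HD := unfold amalgam_setting in HD; cbv zeta in HD;
  destruct HD as (U&Ie&Imul&Iinv&Assoc&Id&Inv&Ae&Amul&Ainv&AIn&Inter&Dnn&Dz&Dsym&Dtri&Dinv&Acl&Agree).

Lemma inv_e D (HD : amalgam_setting D) : inv D (Defs.e D) = Defs.e D.
Proof.
  dHD HD. destruct (U (Defs.e D)) as [l Hl].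
  pose proof (proj1 (Inv l _ Hl)) as H1.
  rewrite (proj1 (Id l _ (Iinv l _ Hl))) in H1. exact H1.
Qed.

Lemma inv_inv D (HD : amalgam_setting D) l x : Defs.In D l x -> inv D (inv D x) = x.
Proof.
  intro Hx. dHD HD.
  assert (Hix := Iinv l _ Hx). assert (Hiix := Iinv l _ Hix).
  rewrite <- (proj2 (Id l _ Hx)) at 2.
  rewrite <- (proj1 (Inv l _ Hix)).
  rewrite <- (Assoc l) by auto.
  rewrite (proj1 (Inv l _ Hx)).
  rewrite (proj1 (Id l _ Hiix)). reflexivity.
Qed.

Lemma dl_inv D (HD : amalgam_setting D) l x y : Defs.In D l x -> Defs.In D l y ->
  dl D l (inv D x) (inv D y) = dl D l x y.
Proof.
  intros Hx Hy. dHD HD.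
  assert (Hix := Iinv l _ Hx). assert (Hiy := Iinv l _ Hy).
  assert (E1 : dl D l (mul D x (inv D x)) (mul D x (inv D y)) = dl D l (inv D x) (inv D y))
    by (apply Dinv; auto).
  rewrite (proj1 (Inv l _ Hx)) in E1.
  assert (E2 : dl D l (mul D (Defs.e D) y) (mul D (mul D x (inv D y)) y)
               = dl D l (Defs.e D) (mul D x (inv D y))) by (apply Dinv; auto).
  rewrite (proj1 (Id l _ Hy)) in E2.
  rewrite (Assoc l) in E2 by auto.
  rewrite (proj2 (Inv l _ Hy)) in E2. rewrite (proj2 (Id l _ Hx)) in E2.
  rewrite <- E1, <- E2. apply Dsym; auto.
Qed.

Definition adset (D : amalgam_data) (x y : T D) : R -> Prop := fun r =>
    (exists l, Defs.In D l x /\ Defs.In D l y /\ r = dl D l x y) \/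
    ((~ exists l, Defs.In D l x /\ Defs.In D l y) /\
      exists l1 l2 a, Defs.In D l1 x /\ Defs.In D l2 y /\ A D a /\
        r = dl D l1 x a + dl D l2 a y).

Lemma ad_eq D x y : amalg_dist D x y = Rinf (adset D x y).
Proof. reflexivity. Qed.

Lemma adset_nn D (HD : amalgam_setting D) x y r : adset D x y r -> 0 <= r.
Proof.
  dHD HD. intros [[l [H1 [H2 ->]]]|[_ [l1 [l2 [a [H1 [H2 [H3 ->]]]]]]]].
  - apply Dnn; auto.
  - assert (0 <= dl D l1 x a) by (apply Dnn; auto).
    assert (0 <= dl D l2 a y) by (apply Dnn; auto). lra.
Qed.

Lemma adset_ne D (HD : amalgam_setting D) x y : exists r, adset D x y r.
Proof.
  destruct (classic (exists l, Defs.In D l x /\ Defs.In D l y)) as [[l [H1 H2]]|Hn].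
  - exists (dl D l x y). left. eauto.
  - dHD HD. destruct (U x) as [l1 H1]. destruct (U y) as [l2 H2].
    eexists. right. split; [exact Hn|]. exists l1, l2, (Defs.e D). eauto.
Qed.

Lemma ad_nonneg D (HD : amalgam_setting D) x y : 0 <= amalg_dist D x y.
Proof.
  rewrite ad_eq. apply Rinf_ge. apply adset_ne; auto. intros. eapply adset_nn; eauto.
Qed.

Lemma ad_inv D (HD : amalgam_setting D) x y :
  amalg_dist D (inv D x) (inv D y) <= amalg_dist D x y.
Proof.
  rewrite !ad_eq. apply Rinf_ge. apply adset_ne; auto.
  intros r Hr. apply Rinf_le with 0. intros; eapply adset_nn; eauto.
  pose proof HD as HD'.
  destruct Hr as [[l [H1 [H2 ->]]]|[Hn [l1 [l2 [a [H1 [H2 [H3 ->]]]]]]]].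
  - left. dHD HD'. exists l. split; [auto|split; [auto|]]. rewrite dl_inv; auto.
  - right. split.
    + intros [l [K1 K2]]. apply Hn. exists l.
      dHD HD'. rewrite <- (inv_inv D HD l1 x H1). rewrite <- (inv_inv D HD l2 y H2). auto.
    + dHD HD'. exists l1, l2, (inv D a). split; [auto|split; [auto|split; [auto|]]].
      rewrite (dl_inv D HD l1 x a), (dl_inv D HD l2 a y); auto.
Qed.

Lemma ld_nonneg D (HD : amalgam_setting D) p q :
  0 <= letter_dist (amalg_dist D) (Defs.e D) p q.
Proof.
  destruct p as [x []], q as [y []]; simpl;
  repeat match goal with |- 0 <= _ + _ => apply Rplus_le_le_0_compat end;
  apply ad_nonneg; auto.
Qed.

Lemma rho_nonneg {L} (dd : L -> L -> R) (H : forall a b, 0 <= dd a b) u v : 0 <= rho dd u v.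
Proof.
  revert v; induction u as [|a u IH]; intros [|b v]; simpl; try lra.
  specialize (IH v). specialize (H a b). lra.
Qed.

Definition flip {X : Type} (p : X * bool) : X * bool := (fst p, negb (snd p)).
Definition winv {X : Type} (w : list (X * bool)) := rev (map flip w).

Lemma free_ctx {X : Type} (e0 : X) c c' u v :
  free_eq e0 u v -> free_eq e0 (c ++ u ++ c') (c ++ v ++ c').
Proof.
  induction 1.
  - apply rst_step. destruct H.
    + replace (c ++ (u ++ (x, b) :: (x, negb b) :: v) ++ c')
        with ((c ++ u) ++ (x, b) :: (x, negb b) :: (v ++ c'))
        by (rewrite <- !app_assoc; reflexivity).
      replace (c ++ (u ++ v) ++ c') with ((c ++ u) ++ (v ++ c'))
        by (rewrite <- !app_assoc; reflexivity).
      constructor.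
    + replace (c ++ (u ++ (e0, b) :: v) ++ c') with ((c ++ u) ++ (e0, b) :: (v ++ c'))
        by (rewrite <- !app_assoc; reflexivity).
      replace (c ++ (u ++ v) ++ c') with ((c ++ u) ++ (v ++ c'))
        by (rewrite <- !app_assoc; reflexivity).
      constructor.
  - apply rst_refl.
  - apply rst_sym; auto.
  - eapply rst_trans; eauto.
Qed.

Lemma amal_ctx D c c' u v :
  amal_eq D u v -> amal_eq D (c ++ u ++ c') (c ++ v ++ c').
Proof.
  induction 1.
  - apply rst_step. destruct H.
    + replace (c ++ (u ++ a :: b :: v) ++ c') with ((c ++ u) ++ a :: b :: (v ++ c'))
        by (rewrite <- !app_assoc; reflexivity).
      replace (c ++ (u ++ mul D a b :: v) ++ c') with ((c ++ u) ++ mul D a b :: (v ++ c'))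
        by (rewrite <- !app_assoc; reflexivity).
      econstructor; eauto.
    + replace (c ++ (u ++ Defs.e D :: v) ++ c') with ((c ++ u) ++ Defs.e D :: (v ++ c'))
        by (rewrite <- !app_assoc; reflexivity).
      replace (c ++ (u ++ v) ++ c') with ((c ++ u) ++ (v ++ c'))
        by (rewrite <- !app_assoc; reflexivity).
      constructor.
  - apply rst_refl.
  - apply rst_sym; auto.
  - eapply rst_trans; eauto.
Qed.

Lemma amal_cons D x a b : amal_eq D a b -> amal_eq D (x :: a) (x :: b).
Proof.
  intro H. pose proof (amal_ctx D (x :: nil) nil a b H) as K.
  rewrite !app_nil_r in K. exact K.
Qed.

Lemma free_pad {X : Type} (e0 : X) u k : free_eq e0 (u ++ repeat (e0, false) k) u.
Proof.
  induction k as [|k IH]; simpl.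
  - rewrite app_nil_r. apply rst_refl.
  - eapply rst_trans; [|exact IH]. apply rst_step. apply (fs_unit e0 u (repeat (e0, false) k) false).
Qed.

Lemma amal_pad D u k : amal_eq D (u ++ repeat (Defs.e D) k) u.
Proof.
  induction k as [|k IH]; simpl.
  - rewrite app_nil_r. apply rst_refl.
  - eapply rst_trans; [|exact IH]. apply rst_step. apply (as_unit D u (repeat (Defs.e D) k)).
Qed.

Lemma free_winv_r {X : Type} (e0 : X) w : free_eq e0 (w ++ winv w) nil.
Proof.
  induction w as [|p w IH].
  - apply rst_refl.
  - unfold winv in *. simpl.
    pose proof (free_ctx e0 (p :: nil) (flip p :: nil) _ _ IH) as K.
    simpl in K. rewrite app_assoc. simpl. eapply rst_trans; [exact K|].
    destruct p as [x b]. apply rst_step. apply (fs_cancel e0 nil nil x b).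
Qed.

Lemma free_winv_l {X : Type} (e0 : X) w : free_eq e0 (winv w ++ w) nil.
Proof.
  induction w as [|p w IH].
  - apply rst_refl.
  - unfold winv in *. simpl. rewrite <- app_assoc. simpl.
    eapply rst_trans; [|exact IH]. apply rst_step.
    destruct p as [x b]. simpl.
    pose proof (fs_cancel e0 (rev (map flip w)) w x (negb b)) as K.
    rewrite Bool.negb_involutive in K. exact K.
Qed.

Lemma phiw_app D u v : phiw D (u ++ v) = phiw D u ++ phiw D v.
Proof. unfold phiw. apply map_app. Qed.

Lemma phiw_false D a : phiw D (map (fun x => (x, false)) a) = a.
Proof. induction a; simpl; f_equal; auto. Qed.

Lemma phi_free D (HD : amalgam_setting D) u v :
  free_eq (Defs.e D) u v -> amal_eq D (phiw D u) (phiw D v).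
Proof.
  induction 1.
  - destruct H.
    + rewrite !phiw_app. simpl.
      pose proof HD as HD'. dHD HD'. destruct (U x) as [l Hl].
      eapply rst_trans.
      * apply rst_step. apply (as_mul D (phiw D u) (phiw D v) l); destruct b; simpl; auto.
      * replace (mul D (if b then inv D x else x) (if negb b then inv D x else x)) with (Defs.e D).
        -- apply rst_step. apply as_unit.
        -- destruct b; simpl; symmetry; [apply (Inv l x Hl)|apply (Inv l x Hl)].
    + rewrite !phiw_app. simpl.
      replace (if b then inv D (Defs.e D) else Defs.e D) with (Defs.e D)
        by (destruct b; [rewrite inv_e|]; auto).
      apply rst_step. apply as_unit.
  - apply rst_refl.
  - apply rst_sym; auto.
  - eapply rst_trans; eauto.
Qed.

Lemma rho_false D a b :
  rho (letter_dist (amalg_dist D) (Defs.e D)) (map (fun x => (x, false)) a) (map (fun x => (x, false)) b)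
  = rho (amalg_dist D) a b.
Proof.
  revert b; induction a as [|x a IH]; intros [|y b]; simpl; try rewrite IH; reflexivity.
Qed.

Lemma build D (HD : amalgam_setting D) u v : length u = length v ->
  exists a b, length a = length b /\ amal_eq D a (phiw D u) /\ amal_eq D b (phiw D v) /\
    rho (amalg_dist D) a b <= rho (letter_dist (amalg_dist D) (Defs.e D)) u v.
Proof.
  revert v; induction u as [|p u IH]; intros [|q v] Hl; simpl in Hl; try discriminate.
  - exists nil, nil. simpl. repeat split; try apply rst_refl. lra.
  - injection Hl as Hl. destruct (IH v Hl) as [a [b [Hab [Ha [Hb Hr]]]]].
    assert (Ue : forall w w', amal_eq D w w' -> amal_eq D (Defs.e D :: w) w').
    { intros w w' H. eapply rst_trans; [|exact H]. apply rst_step. apply (as_unit D nil w). }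
    destruct p as [x []], q as [y []]; simpl.
    + exists (inv D x :: a), (inv D y :: b). simpl. repeat split.
      * f_equal; auto.
      * apply amal_cons; auto.
      * apply amal_cons; auto.
      * pose proof (ad_inv D HD x y). lra.
    + exists (inv D x :: Defs.e D :: a), (Defs.e D :: y :: b). simpl. repeat split.
      * do 2 f_equal; auto.
      * apply amal_cons; auto.
      * apply Ue. apply amal_cons; auto.
      * pose proof (ad_inv D HD x (Defs.e D)). rewrite inv_e in H by auto. lra.
    + exists (x :: Defs.e D :: a), (Defs.e D :: inv D y :: b). simpl. repeat split.
      * do 2 f_equal; auto.
      * apply amal_cons; auto.
      * apply Ue. apply amal_cons; auto.
      * pose proof (ad_inv D HD (Defs.e D) y). rewrite inv_e in H by auto. lra.
    + exists (x :: a), (y :: b). simpl. repeat split.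
      * f_equal; auto.
      * apply amal_cons; auto.
      * apply amal_cons; auto.
      * lra.
Qed.

Lemma dF_ne D u0 v0 : exists r, exists u v, length u = length v /\
    free_eq (Defs.e D) u u0 /\ free_eq (Defs.e D) v v0 /\
    r = rho (letter_dist (amalg_dist D) (Defs.e D)) u v.
Proof.
  eexists. exists (u0 ++ repeat (Defs.e D, false) (length v0)),
               (v0 ++ repeat (Defs.e D, false) (length u0)).
  split; [rewrite !length_app, !repeat_length; lia|].
  split; [apply free_pad|]. split; [apply free_pad|]. reflexivity.
Qed.

Lemma dF_nonneg D (HD : amalgam_setting D) u v : 0 <= dF D u v.
Proof.
  unfold dF. apply Rinf_ge. apply dF_ne.
  intros y [u' [v' [_ [_ [_ ->]]]]]. apply rho_nonneg. apply ld_nonneg; auto.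
Qed.

Lemma inN_lemma D (HD : amalgam_setting D) w a :
  amal_eq D a (phiw D w) -> inN D (winv w ++ map (fun x => (x, false)) a).
Proof.
  intro H. unfold inN. rewrite phiw_app, phiw_false.
  eapply rst_trans.
  - pose proof (amal_ctx D (phiw D (winv w)) nil _ _ H) as K. rewrite !app_nil_r in K. exact K.
  - rewrite <- phiw_app. apply (phi_free D HD _ nil). apply free_winv_l.
Qed.

Theorem mainTheorem4 (D : amalgam_data) (HD : amalgam_setting D) :
  (* the induced map F(G)/N → ∐_A G_λ is onto (φ surjective) *)
  (forall a : list (T D), exists w, amal_eq D (phiw D w) a) /\
  (* and it is an isometry: d_0(w1 N, w2 N) = d_(φ w1, φ w2) *)
  (forall w1 w2 : list (T D * bool), d0 D w1 w2 = dunder D (phiw D w1) (phiw D w2)).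
Proof.
  split.
  - intro a. exists (map (fun x => (x, false)) a). rewrite phiw_false. apply rst_refl.
  - intros w1 w2. apply Rle_antisym.
    + unfold dunder at 1. apply Rinf_ge.
      * eexists. exists (phiw D w1 ++ repeat (Defs.e D) (length (phiw D w2))),
                        (phiw D w2 ++ repeat (Defs.e D) (length (phiw D w1))).
        split; [rewrite !length_app, !repeat_length; lia|].
        split; [apply amal_pad|]. split; [apply amal_pad|]. reflexivity.
      * intros r [a [b [Hl [Ha [Hb ->]]]]].
        set (ua := map (fun x : T D => (x, false)) a).
        set (ub := map (fun x : T D => (x, false)) b).
        apply Rle_trans with (dF D (w1 ++ (winv w1 ++ ua)) (w2 ++ (winv w2 ++ ub))).
        -- unfold d0. apply Rinf_le with 0.
           ++ intros y [h1 [h2 [_ [_ ->]]]]. apply dF_nonneg; auto.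
           ++ exists (winv w1 ++ ua), (winv w2 ++ ub).
              split; [apply inN_lemma; auto|]. split; [apply inN_lemma; auto|]. reflexivity.
        -- unfold dF. apply Rinf_le with 0.
           ++ intros y [u' [v' [_ [_ [_ ->]]]]]. apply rho_nonneg. apply ld_nonneg; auto.
           ++ exists ua, ub. split; [unfold ua, ub; rewrite !length_map; auto|].
              assert (Hs : forall w (z : list (T D * bool)),
                         free_eq (Defs.e D) z (w ++ (winv w ++ z))).
              { intros w z. apply rst_sym.
                pose proof (free_ctx (Defs.e D) nil z _ _ (free_winv_r (Defs.e D) w)) as K.
                simpl in K. rewrite app_assoc. exact K. }
              split; [apply Hs|]. split; [apply Hs|].
              unfold ua, ub. rewrite rho_false. reflexivity.
    + unfold d0. apply Rinf_ge.
      * eexists. exists nil, nil. split; [apply rst_refl|]. split; [apply rst_refl|]. reflexivity.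
      * intros y [h1 [h2 [Hh1 [Hh2 ->]]]]. unfold dF. apply Rinf_ge. apply dF_ne.
        intros r [u [v [Hl [Hu [Hv ->]]]]].
        destruct (build D HD u v Hl) as [a [b [Hab [Ha [Hb Hr]]]]].
        eapply Rle_trans; [|exact Hr].
        unfold dunder. apply Rinf_le with 0.
        -- intros z [a' [b' [_ [_ [_ ->]]]]]. apply rho_nonneg. intros; apply ad_nonneg; auto.
        -- exists a, b. split; [exact Hab|].
           assert (Hw : forall w h z, inN D h -> free_eq (Defs.e D) z (w ++ h) ->
                      amal_eq D (phiw D z) (phiw D w)).
           { intros w h z Hh Hz. eapply rst_trans; [apply phi_free; eauto|].
             rewrite phiw_app.
             pose proof (amal_ctx D (phiw D w) nil _ _ Hh) as K. rewrite !app_nil_r in K.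
             exact K. }
           split; [eapply rst_trans; [exact Ha|]; exact (Hw w1 h1 u Hh1 Hu)|].
           split; [eapply rst_trans; [exact Hb|]; exact (Hw w2 h2 v Hh2 Hv)|].
           reflexivity.
Qed.
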